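(* Let $\Psi:\{0,1\}^n\times\{0,1\}^n\to\{\mathtt{A},\mathtt{T},\mathtt{C},\mathtt{G}\}^n$ be the map sending $(\mathbf{a},\mathbf{b})$ to $\mathbf{c}=(c_1,\dots,c_n)$ with $c_i=\mathtt{A},\mathtt{T},\mathtt{C},\mathtt{G}$ according as $(a_i,b_i)=(0,0),(0,1),(1,0),(1,1)$ respectively. Let $\mathcal{C}_1,\mathcal{C}_2\subseteq\{0,1\}^n$ be binary codes and let $\mathcal{C}=\{\Psi(\mathbf{a},\mathbf{b}):\mathbf{a}\in\mathcal{C}_1,\mathbf{b}\in\mathcal{C}_2\}$. Then: (1) if $\mathcal{C}_1$ is balanced, then $\mathcal{C}$ is balanced; (2) if $\mathcal{C}_1$ or $\mathcal{C}_2$ is a $\kappa$-WMU code, then $\mathcal{C}$ is a $\kappa$-WMU code; (3) if $d_1,d_2$ are the minimum Hamming distances of $\mathcal{C}_1,\mathcal{C}_2$, then the minimum Hamming distance of $\mathcal{C}$ is at least $\min(d_1,d_2)$; (4) if $\mathcal{C}_2$ is an $f$-APD code, then $\mathcal{C}$ is an $f$-APD code.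
   Context: $\mathbb{F}_2=\{0,1\}$ and $\mathbb{F}_4$ is identified with the DNA alphabet $\{\mathtt{A},\mathtt{T},\mathtt{C},\mathtt{G}\}$. For $\mathbf{a}=(a_1,\dots,a_n)$ write $\mathbf{a}_i^j=(a_i,\dots,a_j)$ if $i\le j$ and $\mathbf{a}_i^j=(a_i,a_{i-1},\dots,a_j)$ if $i>j$. Complement $\bar{\mathbf{a}}$: for binary sequences flip every bit; for DNA sequences apply $\mathtt{A}\leftrightarrow\mathtt{T}$, $\mathtt{C}\leftrightarrow\mathtt{G}$ coordinatewise. A binary sequence of length $n$ is balanced if exactly $n/2$ of its entries are $1$; a DNA sequence of length $n$ is balanced if exactly $n/2$ of its entries lie in $\{\mathtt{G},\mathtt{C}\}$; a code is balanced if all its codewords are. A code $\mathcal{C}\subseteq\mathbb{F}_q^n$ is $\kappa$-WMU ($1\le\kappa<n$) if for all not necessarily distinct $\mathbf{a},\mathbf{b}\in\mathcal{C}$ and all $\kappa\le l<n$, $\mathbf{a}_1^l\ne\mathbf{b}_{n-l+1}^n$. A code $\mathcal{C}\subseteq\mathbb{F}_q^n$ ($q\in\{2,4\}$) is $f$-APD (avoids primer dimers of effective length $f$) if for all not necessarily distinct $\mathbf{a},\mathbf{b}\in\mathcal{C}$ and all $1\le i,j\le n+1-f$ one has $\bar{\mathbf{a}}_i^{f+i-1}\ne\mathbf{b}_j^{f+j-1}$ and $\bar{\mathbf{a}}_i^{f+i-1}\ne\mathbf{b}_{f+j-1}^{j}$. *)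

(* Defs.v *)
From HB Require Import structures.
From mathcomp Require Import all_boot.
Set Implicit Arguments. Unset Strict Implicit. Unset Printing Implicit Defensive.

Inductive dna := dA | dT | dC | dG.

Definition dna_to_pair (x : dna) : bool * bool :=
  match x with dA => (false, false) | dT => (false, true)
             | dC => (true, false) | dG => (true, true) end.
Definition pair_to_dna (p : bool * bool) : dna :=
  match p with (false, false) => dA | (false, true) => dT
             | (true, false) => dC | (true, true) => dG end.
Lemma dna_pairK : cancel dna_to_pair pair_to_dna. Proof. by case. Qed.

HB.instance Definition _ := Finite.copy dna (can_type dna_pairK).

Definition bcomp (x : bool) : bool := ~~ x.
Definition dcomp (x : dna) : dna :=
  match x with dA => dT | dT => dA | dC => dG | dG => dC end.

(* balanced: exactly n/2 entries are 1 (resp. in {G,C}); written 2*count = n *)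
Definition bin_balanced n (C : {set n.-tuple bool}) : Prop :=
  forall a, a \in C -> (count id a).*2 = n.
Definition is_GC (x : dna) : bool := (x == dG) || (x == dC).
Definition dna_balanced n (C : {set n.-tuple dna}) : Prop :=
  forall c, c \in C -> (count is_GC c).*2 = n.

Definition WMU (T : finType) n (kappa : nat) (C : {set n.-tuple T}) : Prop :=
  (1 <= kappa < n) /\
  forall a b, a \in C -> b \in C -> forall l, kappa <= l < n ->
    take l a <> drop (n - l) b.

(* window of length f starting at (1-based) position i: s_i^{f+i-1} *)
Definition window (T : Type) (s : seq T) (i f : nat) : seq T :=
  take f (drop i.-1 s).

Definition APD (T : finType) (comp : T -> T) n (f : nat)
    (C : {set n.-tuple T}) : Prop :=
  forall a b, a \in C -> b \in C -> forall i j,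
    1 <= i <= n + 1 - f -> 1 <= j <= n + 1 - f ->
    window (map comp a) i f <> window b j f /\
    window (map comp a) i f <> rev (window b j f).

Definition ham (T : eqType) (s t : seq T) : nat :=
  count (fun p : T * T => p.1 != p.2) (zip s t).

Definition is_min_dist (T : finType) n (C : {set n.-tuple T}) (d : nat) : Prop :=
  (exists a b, [/\ a \in C, b \in C, a != b & ham a b = d]) /\
  (forall a b, a \in C -> b \in C -> a != b -> d <= ham a b).

Definition Psi n (a b : n.-tuple bool) : n.-tuple dna :=
  [tuple pair_to_dna (tnth a i, tnth b i) | i < n].

Definition PsiCode n (C1 C2 : {set n.-tuple bool}) : {set n.-tuple dna} :=
  [set Psi a b | a in C1, b in C2].

(* Main.v *)
Require Import Defs.
From mathcomp Require Import all_boot.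

Definition p1 (c : dna) : bool := (dna_to_pair c).1.
Definition p2 (c : dna) : bool := (dna_to_pair c).2.

Lemma psi1 n (a b : n.-tuple bool) : map p1 (Psi a b) = a.
Proof.
rewrite /Psi /= -map_comp -[RHS](map_tnth_enum a); apply: eq_map => i /=.
by rewrite /p1; case: (tnth a i); case: (tnth b i).
Qed.

Lemma psi2 n (a b : n.-tuple bool) : map p2 (Psi a b) = b.
Proof.
rewrite /Psi /= -map_comp -[RHS](map_tnth_enum b); apply: eq_map => i /=.
by rewrite /p2; case: (tnth a i); case: (tnth b i).
Qed.

Arguments psi1 {n}.
Arguments psi2 {n}.

Lemma zip_map2 (S T : Type) (f : S -> T) (s t : seq S) :
  zip (map f s) (map f t) = map (fun p => (f p.1, f p.2)) (zip s t).
Proof. by elim: s t => [|x s IH] [|y t] //=; rewrite IH. Qed.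

Lemma ham_map (f : dna -> bool) (s t : seq dna) :
  ham (map f s) (map f t) <= ham s t.
Proof.
rewrite /ham zip_map2 count_map; apply: sub_count => p /=.
by apply: contra => /eqP ->.
Qed.

Lemma p2dcomp : forall c, p2 (dcomp c) = bcomp (p2 c).
Proof. by case. Qed.

Lemma window_map (S T : Type) (f : S -> T) s i k :
  window (map f s) i k = map f (window s i k).
Proof. by rewrite /window map_take map_drop. Qed.

Theorem lemma2 (n : nat) (C1 C2 : {set n.-tuple bool}) :
  (bin_balanced C1 -> dna_balanced (PsiCode C1 C2)) /\
  (forall kappa, WMU kappa C1 \/ WMU kappa C2 -> WMU kappa (PsiCode C1 C2)) /\
  (forall d1 d2, is_min_dist C1 d1 -> is_min_dist C2 d2 ->
     forall x y, x \in PsiCode C1 C2 -> y \in PsiCode C1 C2 -> x != y ->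
       minn d1 d2 <= ham x y) /\
  (forall f, APD bcomp f C2 -> APD dcomp f (PsiCode C1 C2)).
Proof.
split.
  move=> Hb c /imset2P [a b Ha Hb' ->].
  have -> : count is_GC (Psi a b) = count id a.
    by rewrite -(psi1 a b) count_map; apply: eq_count; case.
  exact: Hb.
split.
  move=> kappa [[Hk H]|[Hk H]]; split => // x y /imset2P [a b Ha Hb ->]
    /imset2P [a' b' Ha' Hb' ->] l Hl E.
    by apply: (H a a' Ha Ha' l Hl); rewrite -(psi1 a b) -(psi1 a' b') -map_take E map_drop.
  by apply: (H b b' Hb Hb' l Hl); rewrite -(psi2 a b) -(psi2 a' b') -map_take E map_drop.
split.
  move=> d1 d2 [_ H1] [_ H2] x y /imset2P [a b Ha Hb ->]
    /imset2P [a' b' Ha' Hb' ->] Hne.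
  have [Ea|Ea] := eqVneq a a'.
    have [Eb|Eb] := eqVneq b b'; first by rewrite Ea Eb eqxx in Hne.
    apply: leq_trans (geq_minr _ _) _; apply: leq_trans (H2 _ _ Hb Hb' Eb) _.
    by rewrite -{1}(psi2 a b) -(psi2 a' b'); apply: ham_map.
  apply: leq_trans (geq_minl _ _) _; apply: leq_trans (H1 _ _ Ha Ha' Ea) _.
  by rewrite -{1}(psi1 a b) -(psi1 a' b'); apply: ham_map.
move=> f H x y /imset2P [a b Ha Hb ->] /imset2P [a' b' Ha' Hb' ->] i j Hi Hj.
have [H1 H2] := H b b' Hb Hb' i j Hi Hj.
have K : map p2 (map dcomp (Psi a b)) = map bcomp b.
  by rewrite -map_comp (eq_map p2dcomp) map_comp psi2.
split=> E.
  by apply: H1; rewrite -K -(psi2 a' b') (@window_map _ _ p2) (@window_map _ _ p2) E.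
by apply: H2; rewrite -K -(psi2 a' b') (@window_map _ _ p2) (@window_map _ _ p2) E map_rev.
Qed.
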